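(* Let $\mathcal E_\infty(\mathbb N)=\{f\in l^\infty(\mathbb N):\mathrm{AE}(f)=+\infty\}$. Then $\mathcal E_\infty(\mathbb N)$ is dense in $l^\infty(\mathbb N)$ in the norm topology.
   Context: $\mathbb N=\{0,1,2,\ldots\}$ and $l^\infty(\mathbb N)$ is the C*-algebra of bounded complex-valued functions on $\mathbb N$ with the sup norm. Let $\sigma_A:l^\infty(\mathbb N)\to l^\infty(\mathbb N)$ be $(\sigma_Af)(n)=f(n+1)$. An anqie is a unital C*-subalgebra $\mathcal A\subseteq l^\infty(\mathbb N)$ with $\sigma_A(\mathcal A)\subseteq\mathcal A$. For $\mathcal F\subseteq l^\infty(\mathbb N)$, $\mathcal A_{\mathcal F}$ denotes the smallest anqie containing $\mathcal F$. For an anqie $\mathcal A$ with maximal ideal space $X$ (weak* topology), the map $A:X\to X$, $(A\rho)(f)=\rho(\sigma_Af)$, is continuous; the anqie entropy $\mathrm{AE}(\mathcal A)\in[0,\infty]$ is the topological entropy $h(A)$, and $\mathrm{AE}(f)=\mathrm{AE}(\mathcal A_{\{f\}})$. *)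

(* Defs.v *)
From Stdlib Require Import Reals List.
Import ListNotations.
Open Scope R_scope.

Record C := mkC { Re : R; Im : R }.
Definition C0 : C := mkC 0 0.
Definition C1 : C := mkC 1 0.
Definition Cadd (z w : C) : C := mkC (Re z + Re w) (Im z + Im w).
Definition Copp (z : C) : C := mkC (- Re z) (- Im z).
Definition Csub (z w : C) : C := Cadd z (Copp w).
Definition Cmul (z w : C) : C :=
  mkC (Re z * Re w - Im z * Im w) (Re z * Im w + Im z * Re w).
Definition Cconj (z : C) : C := mkC (Re z) (- Im z).
Definition Cmod (z : C) : R := sqrt (Re z * Re z + Im z * Im z).

(** Complex sequences on N = {0,1,2,...}; l^infty(N) = bounded ones. *)
Definition seqC := nat -> C.
Definition bounded (f : seqC) : Prop := exists B : R, forall n, Cmod (f n) <= B.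
Definition linf_dist_le (f g : seqC) (e : R) : Prop :=
  forall n, Cmod (Csub (f n) (g n)) <= e.

Definition sadd (f g : seqC) : seqC := fun n => Cadd (f n) (g n).
Definition smul (f g : seqC) : seqC := fun n => Cmul (f n) (g n).
Definition sscale (c : C) (f : seqC) : seqC := fun n => Cmul c (f n).
Definition sconj (f : seqC) : seqC := fun n => Cconj (f n).
Definition sone : seqC := fun _ => C1.
Definition shift (f : seqC) : seqC := fun n => f (S n).

(** An anqie: a unital C*-subalgebra of l^infty(N) (norm-closed, closed under
    the algebra operations and conjugation, containing 1) which is
    invariant under the shift. *)
Definition anqie (B : seqC -> Prop) : Prop :=
  (forall f, B f -> bounded f) /\
  B sone /\
  (forall f g, B f -> B g -> B (sadd f g)) /\
  (forall c f, B f -> B (sscale c f)) /\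
  (forall f g, B f -> B g -> B (smul f g)) /\
  (forall f, B f -> B (sconj f)) /\
  (forall f, bounded f ->
     (forall e, 0 < e -> exists h, B h /\ linf_dist_le f h e) -> B f) /\
  (forall f, B f -> B (shift f)).

Definition gen_anqie (F : seqC -> Prop) (g : seqC) : Prop :=
  forall B, anqie B -> (forall f, F f -> B f) -> B g.

(** Maximal ideal space: characters (nonzero multiplicative linear functionals)
    of A.  Functionals are represented as functions seqC -> C, of which only
    the values on A matter. *)
Definition character (A : seqC -> Prop) (rho : seqC -> C) : Prop :=
  (forall f g, A f -> A g -> rho (sadd f g) = Cadd (rho f) (rho g)) /\
  (forall c f, A f -> rho (sscale c f) = Cmul c (rho f)) /\
  (forall f g, A f -> A g -> rho (smul f g) = Cmul (rho f) (rho g)) /\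
  rho sone = C1.

(** Weak* open subsets of the maximal ideal space X. *)
Definition wopen (A : seqC -> Prop) (O : (seqC -> C) -> Prop) : Prop :=
  forall rho, character A rho -> O rho ->
    exists (gs : list seqC) (eps : R), 0 < eps /\ (forall g, In g gs -> A g) /\
      forall rho', character A rho' ->
        (forall g, In g gs -> Cmod (Csub (rho' g) (rho g)) < eps) -> O rho'.

Definition Amap (rho : seqC -> C) : seqC -> C := fun f => rho (shift f).
Definition Aiter (n : nat) (rho : seqC -> C) : seqC -> C :=
  fun f => rho (Nat.iter n shift f).

Definition fin_open_cover (A : seqC -> Prop) (U : list ((seqC -> C) -> Prop)) : Prop :=
  (forall O, In O U -> wopen A O) /\
  (forall rho, character A rho -> exists O, In O U /\ O rho).

(** Members of the join U v A^{-1}U v ... v A^{-(n-1)}U, indexed by words w of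
    length n over the indices of U: the set of rho with A^i rho in U_{w_i}. *)
Definition join_set (U : list ((seqC -> C) -> Prop)) (n : nat) (w : list nat)
  (rho : seqC -> C) : Prop :=
  forall i, (i < n)%nat -> nth (nth i w 0%nat) U (fun _ => False) (Aiter i rho).

Definition join_covers_with (A : seqC -> Prop) (U : list ((seqC -> C) -> Prop))
  (n k : nat) : Prop :=
  exists ws : list (list nat), length ws = k /\
    (forall w, In w ws -> length w = n /\ forall j, In j w -> (j < length U)%nat) /\
    (forall rho, character A rho -> exists w, In w ws /\ join_set U n w rho).

Definition join_min_card (A : seqC -> Prop) (U : list ((seqC -> C) -> Prop))
  (n k : nat) : Prop :=
  join_covers_with A U n k /\ forall k', join_covers_with A U n k' -> (k <= k')%nat.

Definition cover_entropy (A : seqC -> Prop) (U : list ((seqC -> C) -> Prop)) (h : R) : Prop :=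
  exists c : nat -> nat,
    (forall n, join_min_card A U (S n) (c n)) /\
    Un_cv (fun n => ln (INR (c n)) / INR (S n)) h.

Definition AE_infinite (A : seqC -> Prop) : Prop :=
  forall M : R, exists U, fin_open_cover A U /\
    exists h, cover_entropy A U h /\ M < h.

Definition E_infty (f : seqC) : Prop :=
  bounded f /\ AE_infinite (gen_anqie (fun g => g = f)).

Definition linf_dense (S : seqC -> Prop) : Prop :=
  forall g, bounded g -> forall e, 0 < e -> exists f, S f /\ linf_dist_le f g e.

(* Main.v *)
Require Import Defs.
From Stdlib Require Import Reals List Lia Lra Arith FinFun FunctionalExtensionality.
Import ListNotations.
Local Open Scope nat_scope.

Definition blen (l : nat) : nat := (S l)^(S l) * S l.
Definition digit (M c i : nat) : nat := (c / M^i) mod M.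
Fixpoint sblk (fuel l n : nat) : nat :=
  match fuel with
  | 0 => 0
  | S f => if n <? blen l then digit (S l) (n / S l) (n mod S l) else sblk f (S l) (n - blen l)
  end.
Definition sU (n : nat) : nat := sblk (S n) 0 n.
Fixpoint Q (l d : nat) : nat := match d with 0 => 0 | S d' => blen l + Q (S l) d' end.

Lemma blen_pos l : 1 <= blen l.
Proof. unfold blen. assert (0 < S l ^ S l) by (apply Nat.neq_0_lt_0, Nat.pow_nonzero; lia). nia. Qed.

Lemma sblk_Q d : forall l x f, x < blen (d + l) -> Q l d + x < f ->
  sblk f l (Q l d + x) = digit (S (d + l)) (x / S (d+l)) (x mod S (d+l)).
Proof.
  induction d; intros l x f Hx Hf; destruct f as [|f]; simpl Q in *; try lia; simpl sblk.
  - simpl in Hx. destruct (Nat.ltb_spec x (blen l)); [reflexivity | lia].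
  - destruct (Nat.ltb_spec (blen l + Q (S l) d + x) (blen l)). lia.
    replace (blen l + Q (S l) d + x - blen l) with (Q (S l) d + x) by lia.
    rewrite IHd. replace (d + S l) with (S (d + l)) by lia. reflexivity.
    replace (d + S l) with (S d + l) by lia; auto.
    pose proof (blen_pos l). lia.
Qed.

Fixpoint enc (M : nat) (w : list nat) : nat :=
  match w with [] => 0 | a :: w' => a + M * enc M w' end.

Lemma enc_lt M w : 0 < M -> (forall j, In j w -> j < M) -> enc M w < M ^ length w.
Proof.
  intros HM; induction w; intros Hw; simpl. lia.
  assert (a < M) by (apply Hw; left; auto).
  assert (enc M w < M ^ length w) by (apply IHw; intros; apply Hw; right; auto).
  nia.
Qed.

Lemma digit_enc M w : 0 < M -> (forall j, In j w -> j < M) ->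
  forall i, i < length w -> digit M (enc M w) i = nth i w 0.
Proof.
  intros HM; induction w; intros Hw i Hi; simpl in *. lia.
  assert (a < M) by (apply Hw; left; auto).
  unfold digit in *. destruct i.
  - rewrite Nat.pow_0_r, Nat.div_1_r. replace (a + M * enc M w) with (a + enc M w * M) by ring. rewrite Nat.Div0.mod_add. apply Nat.mod_small; auto.
  - rewrite Nat.pow_succ_r', <- Nat.Div0.div_div.
    replace (a + M * enc M w) with (a + enc M w * M) by ring.
    rewrite Nat.div_add by lia. rewrite (Nat.div_small a M) by auto. simpl.
    apply IHw. intros; apply Hw; right; auto. lia.
Qed.

Lemma sU_universal : forall (w : list nat) K, (forall j, In j w -> j < K) ->
  exists m, forall i, i < length w -> sU (m + i) = nth i w 0.
Proof.
  intros w K Hw.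
  set (l := length w + K). set (M := S l).
  assert (HwM : forall j, In j w -> j < M) by (intros j Hj; specialize (Hw j Hj); unfold M, l; lia).
  set (c := enc M w).
  assert (Hc : c < M ^ M).
  { apply Nat.lt_le_trans with (M ^ length w). apply enc_lt; auto; unfold M; lia.
    apply Nat.pow_le_mono_r; unfold M, l; lia. }
  exists (Q 0 l + c * M). intros i Hi.
  unfold sU. rewrite <- Nat.add_assoc.
  rewrite sblk_Q.
  - replace (l + 0) with l by lia. fold M.
    replace (c * M + i) with (i + c * M) by ring.
    rewrite Nat.div_add, Nat.Div0.mod_add by (unfold M; lia).
    rewrite (Nat.div_small i M), Nat.mod_small by (unfold M, l; lia). rewrite Nat.add_0_l. unfold c.
    apply digit_enc; auto; unfold M; lia.
  - replace (l + 0) with l by lia. unfold blen. fold M.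
    assert (i < M) by (unfold M, l; lia). nia.
  - lia.
Qed.

Fixpoint allwords (K n : nat) : list (list nat) :=
  match n with
  | 0 => [[]]
  | S n' => flat_map (fun j => map (cons j) (allwords K n')) (seq 0 K)
  end.

Lemma allwords_len K n : length (allwords K n) = K ^ n.
Proof.
  induction n; simpl. reflexivity.
  rewrite (flat_map_constant_length (c := K ^ n)). rewrite length_seq. reflexivity.
  intros; rewrite length_map; auto.
Qed.

Lemma allwords_in K n w : In w (allwords K n) <-> length w = n /\ (forall j, In j w -> j < K).
Proof.
  revert w; induction n; intros w; simpl.
  - split. intros [<-|[]]. split; auto. intros j []. 
    intros [H _]. destruct w; [left; auto | discriminate].
  - rewrite in_flat_map. split.
    + intros [j [Hj Hw]]. apply in_map_iff in Hw. destruct Hw as [w' [<- Hw']].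
      apply IHn in Hw'. apply in_seq in Hj. destruct Hw' as [H1 H2]. simpl. split. lia.
      intros i [<-|Hi]. lia. auto.
    + intros [H1 H2]. destruct w as [|a w]. discriminate.
      exists a. split. apply in_seq. specialize (H2 a (or_introl eq_refl)). lia.
      apply in_map. apply IHn. simpl in H1. split. lia. intros; apply H2; right; auto.
Qed.

Lemma NoDup_flat_map_disj {A B} (f : A -> list B) (l : list A) :
  NoDup l -> (forall x, In x l -> NoDup (f x)) ->
  (forall x y z, In x l -> In y l -> x <> y -> In z (f x) -> In z (f y) -> False) ->
  NoDup (flat_map f l).
Proof.
  induction l as [|a l IH]; intros Hl Hf Hd; simpl. constructor.
  inversion Hl; subst. apply NoDup_app. apply Hf; left; auto.
  apply IH; auto. intros; apply Hf; right; auto. intros x y z ? ? ?; eapply Hd; eauto; right; auto.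
  intros z Hz Hz'. apply in_flat_map in Hz'. destruct Hz' as [y [Hy Hzy]].
  apply (Hd a y z); auto. left; auto. right; auto. intro; subst; contradiction.
Qed.

Lemma allwords_nodup K n : NoDup (allwords K n).
Proof.
  induction n; simpl. constructor. simpl; tauto. constructor.
  apply NoDup_flat_map_disj. apply seq_NoDup.
  intros x _. apply FinFun.Injective_map_NoDup; auto. intros a b H; injection H; auto.
  intros x y z _ _ Hxy Hx Hy. apply in_map_iff in Hx, Hy.
  destruct Hx as [u [<- _]]. destruct Hy as [v [Hv _]]. injection Hv; intros; subst; auto.
Qed.

Lemma build_list (P : nat -> nat -> Prop) K n :
  (forall i, i < n -> exists j, j < K /\ P i j) ->
  exists w, length w = n /\ (forall j, In j w -> j < K) /\ forall i, i < n -> P i (nth i w 0).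
Proof.
  induction n; intros H.
  - exists []. simpl; repeat split; try tauto; lia.
  - assert (Hn : forall i, i < n -> exists j, j < K /\ P i j) by (intros; apply H; lia).
    destruct (IHn Hn) as [w [H1 [H2 H3]]].
    destruct (H n) as [j [Hj Pj]]. lia.
    exists (w ++ [j]). rewrite length_app; simpl. repeat split. lia.
    intros a Ha. apply in_app_or in Ha. destruct Ha as [Ha|[<-|[]]]; auto.
    intros i Hi. destruct (Nat.eq_dec i n). subst i.
    rewrite app_nth2 by lia. rewrite H1, Nat.sub_diag. simpl; auto.
    rewrite app_nth1 by lia. apply H3; lia.
Qed.

Local Open Scope R_scope.

Definition realseq (a : nat -> R) : seqC := fun n => mkC (a n) 0.

Lemma mkC_eq a b c d : a = c -> b = d -> mkC a b = mkC c d.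
Proof. intros; subst; reflexivity. Qed.

Lemma rs_add a b : sadd (realseq a) (realseq b) = realseq (fun n => a n + b n).
Proof. apply functional_extensionality; intro n; unfold sadd, realseq, Cadd; simpl; apply mkC_eq; ring. Qed.
Lemma rs_mul a b : smul (realseq a) (realseq b) = realseq (fun n => a n * b n).
Proof. apply functional_extensionality; intro n; unfold smul, realseq, Cmul; simpl; apply mkC_eq; ring. Qed.
Lemma rs_scale c a : sscale (mkC c 0) (realseq a) = realseq (fun n => c * a n).
Proof. apply functional_extensionality; intro n; unfold sscale, realseq, Cmul; simpl; apply mkC_eq; ring. Qed.
Lemma rs_one : sone = realseq (fun _ => 1).
Proof. reflexivity. Qed.
Lemma rs_ext a b : (forall n, a n = b n) -> realseq a = realseq b.
Proof. intro H; apply functional_extensionality; intro n; unfold realseq; rewrite H; reflexivity. Qed.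

Lemma Cmod_real x : Cmod (mkC x 0) = Rabs x.
Proof. unfold Cmod; simpl. replace (x*x+0*0) with (Rsqr x) by (unfold Rsqr; ring). apply sqrt_Rsqr_abs. Qed.

Section Anq.
Variable B : seqC -> Prop.
Hypothesis HB : anqie B.

Lemma anq_bnd f : B f -> Defs.bounded f. Proof. destruct HB as [H _]; auto. Qed.
Lemma anq_one : B sone. Proof. destruct HB as [_ [H _]]; auto. Qed.
Lemma anq_add f g : B f -> B g -> B (sadd f g). Proof. destruct HB as [_ [_ [H _]]]; auto. Qed.
Lemma anq_scale c f : B f -> B (sscale c f). Proof. destruct HB as [_ [_ [_ [H _]]]]; auto. Qed.
Lemma anq_mul f g : B f -> B g -> B (smul f g). Proof. destruct HB as [_ [_ [_ [_ [H _]]]]]; auto. Qed.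
Lemma anq_conj f : B f -> B (sconj f). Proof. destruct HB as [_ [_ [_ [_ [_ [H _]]]]]]; auto. Qed.
Lemma anq_lim f : Defs.bounded f ->
     (forall e, 0 < e -> exists h, B h /\ linf_dist_le f h e) -> B f.
Proof. destruct HB as [_ [_ [_ [_ [_ [_ [H _]]]]]]]; auto. Qed.
Lemma anq_shift f : B f -> B (shift f). Proof. destruct HB as [_ [_ [_ [_ [_ [_ [_ H]]]]]]]; auto. Qed.

Lemma rs_addB a b : B (realseq a) -> B (realseq b) -> B (realseq (fun n => a n + b n)).
Proof. intros; rewrite <- rs_add; apply anq_add; auto. Qed.
Lemma rs_mulB a b : B (realseq a) -> B (realseq b) -> B (realseq (fun n => a n * b n)).
Proof. intros; rewrite <- rs_mul; apply anq_mul; auto. Qed.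
Lemma rs_scaleB c a : B (realseq a) -> B (realseq (fun n => c * a n)).
Proof. intros; rewrite <- rs_scale; apply anq_scale; auto. Qed.
Lemma rs_constB c : B (realseq (fun _ => c)).
Proof. replace (fun _ : nat => c) with (fun _ : nat => c * 1) by (apply functional_extensionality; intro; ring).
  apply rs_scaleB. apply anq_one. Qed.
Lemma rs_powB a N : B (realseq a) -> B (realseq (fun n => a n ^ N)).
Proof. intro H; induction N. simpl; apply anq_one.
  simpl. apply rs_mulB; auto. Qed.
Lemma rs_extB a b : (forall n, a n = b n) -> B (realseq a) -> B (realseq b).
Proof. intros H; rewrite (rs_ext a b H); auto. Qed.
End Anq.

Lemma cos_lip a b : Rabs (cos a - cos b) <= Rabs (a - b).
Proof.
  destruct (MVT_abs cos (fun x => - sin x) b a) as [c [Hc _]].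
  intros; apply derivable_pt_lim_cos.
  rewrite Hc. rewrite <- (Rmult_1_l (Rabs (a - b))) at 2.
  apply Rmult_le_compat_r. apply Rabs_pos.
  rewrite Rabs_Ropp. apply Rabs_le. apply SIN_bound.
Qed.

Section Constr.
Variable g : seqC.
Variable Bv : R.
Variable m : nat.

Definition psi n := acos (2 * (/2)^(sU n) - 1).
Definition th0 n := acos (Re (g n) / Bv).
Definition kk n : Z := (up (INR m * th0 n / (2*PI)) - 1)%Z.
Definition theta n := (2*PI*IZR (kk n) + psi n) / INR m.
Definition fseq : seqC := fun n => mkC (Bv * cos (theta n)) (Im (g n)).

Lemma half_pow_bnd k : 0 < (/2)^k <= 1.
Proof.
  induction k; simpl. lra. nra.
Qed.

Lemma kk_nonneg n : (0 <= kk n)%Z.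
Proof.
  unfold kk. set (r := INR m * th0 n / (2*PI)).
  assert (0 <= r). { unfold r. apply Rmult_le_pos. apply Rmult_le_pos. apply pos_INR.
    unfold th0; apply acos_bound. apply Rlt_le, Rinv_0_lt_compat. pose proof PI_RGT_0; lra. }
  destruct (archimed r) as [H1 _]. assert (Hu : 0 < IZR (up r)) by lra.
  apply lt_0_IZR in Hu. lia.
Qed.

Hypothesis Hm : (1 <= m)%nat.

Lemma INRm_pos : 0 < INR m.
Proof. apply lt_0_INR; lia. Qed.

Lemma cos_m_theta n : cos (INR m * theta n) = 2 * (/2)^(sU n) - 1.
Proof.
  pose proof INRm_pos.
  replace (INR m * theta n) with (psi n + 2 * INR (Z.to_nat (kk n)) * PI).
  rewrite cos_period. unfold psi. apply cos_acos. pose proof (half_pow_bnd (sU n)). lra.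
  rewrite INR_IZR_INZ, Znat.Z2Nat.id by apply kk_nonneg. unfold theta. field. lra.
Qed.

Hypothesis HBv : 0 < Bv.

Lemma theta_close n : Rabs (Re (g n)) <= Bv -> Rabs (theta n - th0 n) <= 2*PI / INR m.
Proof.
  intros Hg. pose proof INRm_pos. pose proof PI_RGT_0.
  set (r := INR m * th0 n / (2*PI)).
  destruct (archimed r) as [H1 H2].
  assert (Hk : IZR (kk n) = IZR (up r) - 1) by (unfold kk; rewrite minus_IZR; reflexivity).
  assert (Hp : 0 <= psi n <= PI) by apply acos_bound.
  assert (Ht : theta n - th0 n = (2*PI*(IZR (kk n) - r) + psi n) / INR m)
    by (unfold theta, r; field; lra).
  rewrite Ht. unfold Rdiv. rewrite Rabs_mult, Rabs_inv, (Rabs_right (INR m)) by lra.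
  apply Rmult_le_compat_r. apply Rlt_le, Rinv_0_lt_compat; lra.
  apply Rabs_le. rewrite Hk. split; nra.
Qed.

Lemma Cmod_ge_Re z : Rabs (Re z) <= Cmod z.
Proof.
  unfold Cmod. rewrite <- sqrt_Rsqr_abs. apply sqrt_le_1_alt. unfold Rsqr. nra.
Qed.
Lemma Cmod_ge_Im z : Rabs (Im z) <= Cmod z.
Proof.
  unfold Cmod. rewrite <- sqrt_Rsqr_abs. apply sqrt_le_1_alt. unfold Rsqr. nra.
Qed.
Lemma Cmod_le_sum z : Cmod z <= Rabs (Re z) + Rabs (Im z).
Proof.
  unfold Cmod. rewrite <- (sqrt_Rsqr (Rabs (Re z) + Rabs (Im z))).
  apply sqrt_le_1_alt. unfold Rsqr.
  pose proof (Rabs_pos (Re z)). pose proof (Rabs_pos (Im z)).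
  assert (Re z * Re z = Rabs (Re z) * Rabs (Re z)) by (rewrite <- Rabs_mult; rewrite Rabs_right; [ring|nra]).
  assert (Im z * Im z = Rabs (Im z) * Rabs (Im z)) by (rewrite <- Rabs_mult; rewrite Rabs_right; [ring|nra]).
  nra. pose proof (Rabs_pos (Re z)). pose proof (Rabs_pos (Im z)). lra.
Qed.

Lemma fseq_close e n : Rabs (Re (g n)) <= Bv -> Bv * (2*PI / INR m) <= e ->
  Cmod (Csub (fseq n) (g n)) <= e.
Proof.
  intros Hg He. unfold Csub, Cadd, Copp, fseq; simpl.
  replace (Im (g n) + - Im (g n)) with 0 by ring. rewrite Cmod_real.
  assert (Hc : cos (th0 n) = Re (g n) / Bv).
  { unfold th0. apply cos_acos. assert (-Bv <= Re (g n) <= Bv) by (unfold Rabs in Hg; destruct Rcase_abs; lra).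
    split. apply (Rmult_le_reg_r Bv); auto. field_simplify; lra.
    apply (Rmult_le_reg_r Bv); auto. field_simplify; lra. }
  replace (Bv * cos (theta n) + - Re (g n)) with (Bv * (cos (theta n) - cos (th0 n)))
    by (rewrite Hc; field; lra).
  rewrite Rabs_mult, (Rabs_right Bv) by lra.
  eapply Rle_trans; [|apply He]. apply Rmult_le_compat_l. lra.
  eapply Rle_trans. apply cos_lip. apply theta_close; auto.
Qed.

Definition Cj (j : nat) : seqC := realseq (fun n => cos (INR j * theta n)).

Section InB.
Variable B : seqC -> Prop.
Hypothesis HB : anqie B.
Hypothesis Hf : B fseq.

Lemma C1_in : B (Cj 1).
Proof.
  replace (Cj 1) with (sscale (mkC (/(2*Bv)) 0) (sadd fseq (sconj fseq))).
  apply anq_scale; auto. apply anq_add; auto. apply anq_conj; auto.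
  apply functional_extensionality; intro n. unfold Cj, realseq, sscale, sadd, sconj, fseq, Cconj, Cadd, Cmul; simpl.
  apply mkC_eq; simpl; [rewrite Rmult_1_l; field; lra | ring].
Qed.

Lemma Cj_in : forall j, B (Cj j) /\ B (Cj (S j)).
Proof.
  induction j. split. replace (Cj 0) with sone. apply anq_one; auto. unfold Cj; rewrite rs_one; apply rs_ext. intros; simpl; rewrite Rmult_0_l, cos_0; auto.
  apply C1_in.
  destruct IHj as [H0 H1]. split; auto.
  unfold Cj in *.
  apply rs_extB with (fun n => 2 * (cos (INR 1 * theta n) * cos (INR (S j) * theta n)) + (-1) * cos (INR j * theta n)).
  intros n. rewrite !S_INR. simpl.
  replace ((INR j + 1 + 1) * theta n) with ((INR j + 1) * theta n + theta n) by ring.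
  replace (INR j * theta n) with ((INR j + 1) * theta n - theta n) by ring.
  rewrite cos_plus, cos_minus, Rplus_0_l, Rmult_1_l. ring.
  apply rs_addB; auto; apply rs_scaleB; auto. apply rs_mulB; auto. apply C1_in.
Qed.

Definition hseq : seqC := realseq (fun n => (/2)^(sU n)).

Lemma h_in : B hseq.
Proof.
  unfold hseq. apply rs_extB with (fun n => /2 * (cos (INR m * theta n) + 1)).
  intros n. rewrite cos_m_theta. field.
  apply rs_scaleB; auto. apply rs_addB; auto. apply (proj1 (Cj_in m)). apply rs_constB; auto.
Qed.

End InB.
End Constr.

Definition tailv (k n : nat) : R := if (sU n <? k)%nat then 0 else 1.
Definition indv (k n : nat) : R := if (sU n =? k)%nat then 1 else 0.

Lemma Csub_real a b : Csub (mkC a 0) (mkC b 0) = mkC (a - b) 0.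
Proof. unfold Csub, Cadd, Copp; simpl; apply mkC_eq; ring. Qed.

Lemma two_half k : 2^k * (/2)^k = 1.
Proof. rewrite <- Rpow_mult_distr. replace (2 * /2) with 1 by field. apply pow1. Qed.

Section Proj.
Variable B : seqC -> Prop.
Hypothesis HB : anqie B.
Hypothesis Hh : B (realseq (fun n => (/2)^(sU n))).

Lemma ind_from_tail k : B (realseq (tailv k)) -> B (realseq (indv k)).
Proof.
  intros Ht. apply anq_lim; auto.
  - exists 1. intros n. unfold realseq. rewrite Cmod_real. unfold indv.
    destruct (sU n =? k)%nat; rewrite ?Rabs_R1, ?Rabs_R0; lra.
  - intros eps Heps.
    destruct (pow_lt_1_zero (/2)) with eps as [N HN]; auto.
    rewrite Rabs_right; lra.
    set (q := fun n => 2^k * ((/2)^(sU n) * tailv k n)).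
    exists (realseq (fun n => q n ^ (S N))). split.
    apply rs_powB; auto. apply rs_scaleB; auto. apply rs_mulB; auto.
    intros n. unfold realseq. rewrite Csub_real, Cmod_real.
    unfold q, indv, tailv.
    destruct (Nat.ltb_spec (sU n) k).
    + destruct (Nat.eqb_spec (sU n) k). lia. rewrite Rmult_0_r, Rmult_0_r. simpl.
      rewrite Rmult_0_l, Rminus_0_r, Rabs_R0. lra.
    + destruct (Nat.eqb_spec (sU n) k).
      * rewrite e, Rmult_1_r, two_half, pow1, Rminus_diag, Rabs_R0. lra.
      * replace (sU n) with (k + (sU n - k))%nat by lia. rewrite pow_add, Rmult_1_r.
        rewrite <- Rmult_assoc, two_half, Rmult_1_l.
        set (d := (sU n - k)%nat). assert (Hd : (1 <= d)%nat) by (unfold d; lia).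
        assert (0 <= (/2)^d <= /2).
        { destruct d. lia. simpl. pose proof (half_pow_bnd d). split; nra. }
        assert (0 <= ((/2)^d)^(S N) <= (/2)^(S N)).
        { split. apply pow_le; lra. apply pow_incr; lra. }
        assert ((/2)^(S N) < eps). { specialize (HN (S N)). rewrite Rabs_right in HN.
          apply HN; lia. apply Rle_ge, pow_le; lra. }
        rewrite Rabs_left1; lra.
Qed.
End Proj.

Lemma tail_split j n : tailv j n = indv j n + tailv (S j) n.
Proof. unfold tailv, indv. destruct (Nat.ltb_spec (sU n) j), (Nat.eqb_spec (sU n) j), (Nat.ltb_spec (sU n) (S j)); try lia; ring. Qed.

Section Proj2.
Variable B : seqC -> Prop.
Hypothesis HB : anqie B.
Hypothesis Hh : B (realseq (fun n => (/2)^(sU n))).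

Lemma tail_ind_in k : B (realseq (tailv k)) /\ B (realseq (indv k)).
Proof.
  induction k.
  - assert (B (realseq (tailv 0))).
    { replace (realseq (tailv 0)) with sone. apply anq_one; auto.
      rewrite rs_one; apply rs_ext; intros n; unfold tailv; destruct (Nat.ltb_spec (sU n) 0); lia || reflexivity. }
    split; auto. apply ind_from_tail; auto.
  - destruct IHk as [H1 H2].
    assert (B (realseq (tailv (S k)))).
    { apply rs_extB with (fun n => tailv k n + (-1) * indv k n).
      intros n; rewrite (tail_split k n); ring.
      apply rs_addB; auto. apply rs_scaleB; auto. }
    split; auto. apply ind_from_tail; auto.
Qed.
End Proj2.

Lemma iter_shift_pt i h n : Nat.iter i shift h n = h (i + n)%nat.
Proof.
  revert n; induction i; intros n; simpl. reflexivity.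
  unfold shift at 1. rewrite IHi. f_equal; lia.
Qed.

Lemma iter_fun i h : Nat.iter i shift h = fun n => h (i + n)%nat.
Proof. apply functional_extensionality; intro; apply iter_shift_pt. Qed.

Lemma char_idem A rho p : character A rho -> A p -> smul p p = p -> rho p = Defs.C0 \/ rho p = Defs.C1.
Proof.
  intros [_ [_ [Hm _]]] Hp Hpp.
  pose proof (Hm p p Hp Hp) as E. rewrite Hpp in E.
  destruct (rho p) as [a b]. unfold Cmul in E; simpl in E. injection E; intros E2 E1.
  assert (b = 0) by nra. subst b.
  assert (a = 0 \/ a = 1) by (assert (a * (a - 1) = 0) by nra; apply Rmult_integral in H; lra).
  destruct H; subst; [left|right]; reflexivity.
Qed.

Definition Pv (K j n : nat) : R := if (Nat.min (sU n) (K - 1) =? j)%nat then 1 else 0.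
Definition Pj K j := realseq (Pv K j).
Definition Oj K j : (seqC -> Defs.C) -> Prop := fun rho => rho (Pj K j) = Defs.C1.
Definition UK K := map (Oj K) (seq 0 K).

Lemma nthU K j : (j < K)%nat -> nth j (UK K) (fun _ => False) = Oj K j.
Proof.
  intros H. unfold UK. rewrite nth_indep with (d' := Oj K 0) by (rewrite length_map, length_seq; auto).
  rewrite map_nth, seq_nth; auto.
Qed.

Lemma Pj_idem K j : smul (Pj K j) (Pj K j) = Pj K j.
Proof. unfold Pj; rewrite rs_mul; apply rs_ext; intros n; unfold Pv; destruct (_ =? _)%nat; ring. Qed.

Section Ent.
Variable A : seqC -> Prop.
Variable K : nat.
Hypothesis HK : (1 <= K)%nat.
Hypothesis Hone : A sone.
Hypothesis Hshift : forall h, A h -> A (shift h).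
Hypothesis Htail : forall k, A (realseq (tailv k)).
Hypothesis Hind : forall k, A (realseq (indv k)).

Lemma P_in j : (j < K)%nat -> A (Pj K j).
Proof.
  intros Hj. destruct (Nat.eq_dec j (K - 1)) as [Hjk|Hjk].
  - replace (Pj K j) with (realseq (tailv (K-1))). auto.
    unfold Pj; apply rs_ext; intros n; unfold Pv, tailv.
    destruct (Nat.eqb_spec (Nat.min (sU n) (K - 1)) j), (Nat.ltb_spec (sU n) (K-1)); lia || reflexivity.
  - replace (Pj K j) with (realseq (indv j)). auto.
    unfold Pj; apply rs_ext; intros n; unfold Pv, indv.
    destruct (Nat.eqb_spec (Nat.min (sU n) (K - 1)) j), (Nat.eqb_spec (sU n) j); lia || reflexivity.
Qed.

Lemma iter_in i h : A h -> A (Nat.iter i shift h).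
Proof. intros H; induction i; simpl; auto. Qed.

Lemma Aiter_char i rho : character A rho -> character A (Aiter i rho).
Proof.
  intros [H1 [H2 [H3 H4]]]. unfold Aiter. repeat split.
  - intros f g Hf Hg. rewrite <- H1 by (apply iter_in; auto). f_equal. rewrite !iter_fun. reflexivity.
  - intros c f Hf. rewrite <- H2 by (apply iter_in; auto). f_equal. rewrite !iter_fun. reflexivity.
  - intros f g Hf Hg. rewrite <- H3 by (apply iter_in; auto). f_equal. rewrite !iter_fun. reflexivity.
  - rewrite iter_fun. exact H4.
Qed.

Lemma char_cover rho : character A rho -> exists j, (j < K)%nat /\ Oj K j rho.
Proof.
  intros Hr.
  assert (Hd : forall d j, (j + d = K - 1)%nat -> rho (realseq (tailv j)) = Defs.C1 ->
     exists i, (i < K)%nat /\ Oj K i rho).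
  { induction d; intros j Hjd Ht.
    - exists j. split. lia. unfold Oj. rewrite <- Ht. f_equal.
      unfold Pj; apply rs_ext; intros n; unfold Pv, tailv.
      destruct (Nat.eqb_spec (Nat.min (sU n) (K - 1)) j), (Nat.ltb_spec (sU n) j); lia || reflexivity.
    - assert (E : realseq (tailv j) = sadd (realseq (indv j)) (realseq (tailv (S j)))).
      { rewrite rs_add; apply rs_ext; intros; apply tail_split. }
      pose proof Hr as [Ha _].
      rewrite E, Ha in Ht by auto.
      assert (Hpi : Pj K j = realseq (indv j)).
      { unfold Pj; apply rs_ext; intros n; unfold Pv, indv.
        destruct (Nat.eqb_spec (Nat.min (sU n) (K - 1)) j), (Nat.eqb_spec (sU n) j); lia || reflexivity. }
      assert (Hid : smul (realseq (indv j)) (realseq (indv j)) = realseq (indv j))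
        by (rewrite rs_mul; apply rs_ext; intros n; unfold indv; destruct (_ =? _)%nat; ring).
      destruct (char_idem A rho (realseq (indv j))) as [H0|H0]; auto.
      + rewrite H0 in Ht. apply (IHd (S j)). lia.
        destruct (rho (realseq (tailv (S j)))) as [a b]. unfold Cadd, Defs.C0, Defs.C1 in Ht; simpl in Ht.
        injection Ht; intros; unfold Defs.C1; apply mkC_eq; lra.
      + exists j; split. lia. unfold Oj; rewrite Hpi; auto. }
  apply (Hd (K - 1)%nat 0%nat). lia.
  replace (realseq (tailv 0)) with sone. apply Hr.
  rewrite rs_one; apply rs_ext; intros n; unfold tailv; destruct (Nat.ltb_spec (sU n) 0); lia || reflexivity.
Qed.

Lemma cover_ok : fin_open_cover A (UK K).
Proof.
  split.
  - intros O HO. unfold UK in HO. apply in_map_iff in HO. destruct HO as [j [<- Hj]].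
    apply in_seq in Hj.
    intros rho Hr Ho. exists [Pj K j], (/2). split. lra. split.
    intros h [<-|[]]. apply P_in; lia.
    intros rho' Hr' Hc. specialize (Hc (Pj K j) (or_introl eq_refl)).
    destruct (char_idem A rho' (Pj K j)) as [H0|H0]; auto. apply P_in; lia. apply Pj_idem.
    exfalso. unfold Oj in Ho. rewrite H0, Ho in Hc. unfold Defs.C0, Defs.C1 in Hc.
    rewrite Csub_real, Cmod_real in Hc. replace (0 - 1) with (-1) in Hc by ring.
    rewrite Rabs_left in Hc; lra.
  - intros rho Hr. destruct (char_cover rho Hr) as [j [Hj Ho]].
    exists (Oj K j). split; auto. apply in_map. apply in_seq. lia.
Qed.

Lemma join_card n : join_min_card A (UK K) n (K ^ n).
Proof.
  assert (HUl : length (UK K) = K) by (unfold UK; rewrite length_map, length_seq; auto).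
  split.
  - exists (allwords K n). split. apply allwords_len. split.
    + intros w Hw. apply allwords_in in Hw. rewrite HUl. auto.
    + intros rho Hr.
      destruct (build_list (fun i j => Oj K j (Aiter i rho)) K n) as [w [H1 [H2 H3]]].
      intros i Hi. apply char_cover. apply Aiter_char; auto.
      exists w. split. apply allwords_in; auto.
      intros i Hi. rewrite nthU. apply H3; auto. apply H2. apply nth_In. lia.
  - intros k' [ws [Hlen [Hws Hcov]]]. rewrite <- Hlen, <- allwords_len.
    apply NoDup_incl_length. apply allwords_nodup.
    intros w Hw. apply allwords_in in Hw. destruct Hw as [Hwl Hwk].
    destruct (sU_universal w K Hwk) as [m0 Hm0].
    set (ev := fun h : seqC => h m0).
    assert (Hev : character A ev) by (unfold ev, character; repeat split; reflexivity).
    destruct (Hcov ev Hev) as [w' [Hw' Hjs]].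
    destruct (Hws w' Hw') as [Hl' Hk']. rewrite HUl in Hk'.
    replace w with w'; auto.
    apply nth_ext with 0%nat 0%nat. lia.
    intros i Hi. specialize (Hjs i ltac:(lia)).
    assert (Hlt : (nth i w' 0 < K)%nat) by (apply Hk', nth_In; auto).
    rewrite nthU in Hjs by auto. unfold Oj, Aiter, ev in Hjs.
    rewrite iter_shift_pt in Hjs. unfold Pj, realseq, Pv, Defs.C1 in Hjs.
    destruct (Nat.eqb_spec (Nat.min (sU (i + m0)) (K - 1)) (nth i w' 0%nat)).
    + rewrite Nat.add_comm, Hm0 in e by lia.
      assert (nth i w 0%nat < K)%nat by (apply Hwk, nth_In; lia). lia.
    + injection Hjs; intros; lra.
Qed.

Lemma entropy_ok : cover_entropy A (UK K) (ln (INR K)).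
Proof.
  exists (fun n => K ^ (S n))%nat. split.
  intros n; apply join_card.
  intros eps Heps. exists 0%nat. intros n _. unfold R_dist.
  rewrite pow_INR, ln_pow. replace (INR (S n) * ln (INR K) / INR (S n) - ln (INR K)) with 0.
  rewrite Rabs_R0; auto. field. apply not_0_INR; lia. apply lt_0_INR; lia.
Qed.
End Ent.

Theorem theorem1p3 : linf_dense E_infty.
Proof.
  intros g [B0 HB0] e He.
  assert (HB0p : 0 <= B0) by (eapply Rle_trans; [apply sqrt_pos | apply (HB0 0%nat)]).
  set (Bv := B0 + 1).
  assert (HBv : 0 < Bv) by (unfold Bv; lra).
  destruct (INR_archimed e (Bv * (2 * PI))) as [m Hm]; auto.
  pose proof PI_RGT_0.
  assert (Hm1 : (1 <= m)%nat).
  { destruct m. simpl in Hm. nra. lia. }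
  assert (HmR : 0 < INR m) by (apply lt_0_INR; lia).
  assert (Hclose : Bv * (2 * PI / INR m) <= e).
  { unfold Rdiv. rewrite <- Rmult_assoc. apply (Rmult_le_reg_r (INR m)); auto.
    rewrite Rmult_assoc, Rinv_l by lra. lra. }
  assert (HRe : forall n, Rabs (Re (g n)) <= Bv).
  { intros n. eapply Rle_trans. apply Cmod_ge_Re. specialize (HB0 n). unfold Bv; lra. }
  exists (fseq g Bv m). split; [split|].
  - exists (Bv + B0). intros n. eapply Rle_trans. apply Cmod_le_sum. unfold fseq; simpl.
    rewrite Rabs_mult, (Rabs_right Bv) by lra.
    assert (Rabs (cos (theta g Bv m n)) <= 1) by (apply Rabs_le; apply COS_bound).
    assert (Rabs (Im (g n)) <= B0) by (eapply Rle_trans; [apply Cmod_ge_Im | apply HB0]).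
    nra.
  - intros M.
    destruct (INR_archimed 1 (exp M)) as [K HK]; try lra. rewrite Rmult_1_r in HK.
    assert (HK1 : (1 <= K)%nat). { destruct K. simpl in HK. pose proof (exp_pos M). lra. lia. }
    set (A := gen_anqie (fun h => h = fseq g Bv m)).
    assert (Hh : forall B, anqie B -> B (fseq g Bv m) -> B (realseq (fun n => (/2)^(sU n)))).
    { intros B HB Hf. apply (h_in g Bv m Hm1 HBv B HB Hf). }
    assert (Htail : forall k, A (realseq (tailv k))).
    { intros k B HB HF. apply (proj1 (tail_ind_in B HB (Hh B HB (HF _ eq_refl)) k)). }
    assert (Hind : forall k, A (realseq (indv k))).
    { intros k B HB HF. apply (proj2 (tail_ind_in B HB (Hh B HB (HF _ eq_refl)) k)). }
    assert (Hone : A sone) by (intros B HB _; apply anq_one; auto).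
    assert (Hsh : forall h, A h -> A (shift h)).
    { intros h Hh' B HB HF. apply anq_shift; auto. apply Hh'; auto. }
    exists (UK K). split. apply cover_ok; auto.
    exists (ln (INR K)). split. apply entropy_ok; auto.
    rewrite <- (ln_exp M). apply ln_increasing. apply exp_pos. lra.
  - intros n. apply fseq_close; auto.
Qed.
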